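(* In a synchronized communication system of $n$ robots, let $IR$ be its isolation-resilience and let $SN$ be the maximum possible number of starving robots in the system. Then $SN+IR=n-1$.
   Context: Model. A system consists of pairwise disjoint unit circles $C_1,\dots,C_n$ in the plane (trajectories) and a communication range $r>0$. Its communication graph $G$ has vertex set $\{C_1,\dots,C_n\}$, $C_i,C_j$ adjacent iff the distance between their centres is at most $2+r$. Positions on a circle are angles (mod $2\pi$). For an edge $(i,j)$, the link position $\phi_{ij}$ is the angle of the point of $C_i$ closest to $C_j$. A schedule $F=(f,g)$ assigns each circle a starting angle $f(C_i)$ and direction $g(C_i)\in\{1,-1\}$; a robot following it on $C_i$ is at $f(C_i)+g(C_i)2\pi t$ at time $t$. $F$ is a synchronization schedule if $g(C_i)=-g(C_j)$ for adjacent circles and robots following $F$ on adjacent $C_i,C_j$ are at $\phi_{ij},\phi_{ji}$ at exactly the same times. A synchronized communication system (SCS) consists of $n$ robots, initially one per circle, following a synchronization schedule, with the switching rule: when a robot on $C_i$ reaches $\phi_{ij}$ and $C_j$ is empty, it instantly passes to $C_j$ and follows the schedule of $C_j$; if $C_j$ has a robot, they meet and each stays on its circle. A partial SCS arises by letting some robots leave (possibly at different times); remaining robots never leave. A surviving robot $u$ starves if every time $u$ arrives at a link position $\phi_{ij}$ of its current circle $C_i$, the circle $C_j$ is empty; the system is in starvation state if all surviving robots starve. The isolation-resilience is the largest $k$ such that, whichever $k$ robots leave, the system does not fall into starvation state. The maximum possible number of starving robots is taken over all partial SCSs obtained from the given SCS by letting robots leave. *)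

(* Defs.v *)
From Stdlib Require Import Reals List Relations.
Open Scope R_scope.

Definition point := (R * R)%type.

Definition dist (p q : point) : R :=
  sqrt ((fst p - fst q) ^ 2 + (snd p - snd q) ^ 2).

(** A system: [n] unit circles C_0..C_{n-1}; circle [i] has centre [c i]
    and radius 1.  Pairwise disjoint (as point sets): centre distance > 2. *)
Definition disjoint_unit_circles (n : nat) (c : nat -> point) : Prop :=
  forall i j, (i < n)%nat -> (j < n)%nat -> i <> j -> dist (c i) (c j) > 2.

Definition adj (n : nat) (c : nat -> point) (r : R) (i j : nat) : Prop :=
  (i < n)%nat /\ (j < n)%nat /\ i <> j /\ dist (c i) (c j) <= 2 + r.

Definition connected_graph (n : nat) (c : nat -> point) (r : R) : Prop :=
  forall i j, (i < n)%nat -> (j < n)%nat -> clos_refl_trans nat (adj n c r) i j.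

(** [at_link c i j th]: the angle [th] (mod 2 pi) on C_i is the link position
    phi_ij, i.e. the point c_i + (cos th, sin th) of C_i is the point of C_i
    closest to C_j, namely c_i + (c_j - c_i)/|c_j - c_i|. *)
Definition at_link (c : nat -> point) (i j : nat) (th : R) : Prop :=
  cos th * dist (c i) (c j) = fst (c j) - fst (c i) /\
  sin th * dist (c i) (c j) = snd (c j) - snd (c i).

Definition sched (f g : nat -> R) (i : nat) (t : R) : R := f i + g i * (2 * PI * t).

Definition sync_schedule (n : nat) (c : nat -> point) (r : R) (f g : nat -> R) : Prop :=
  (forall i, (i < n)%nat -> g i = 1 \/ g i = -1) /\
  (forall i j, adj n c r i j ->
     g i = - g j /\
     (forall t, 0 <= t ->
        (at_link c i j (sched f g i t) <-> at_link c j i (sched f g j t)))).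

(** Robots are numbered by their initial circle: robot [u] starts on C_u.
    [leave u = Some s] : robot u leaves the system at time s (> 0), i.e. it is
    present exactly on [0, s); [leave u = None] : robot u never leaves.
    [loc u t] : index of the circle robot u is on at time t (right-continuous,
    i.e. after any switch happening at time t). *)

Definition present (leave : nat -> option R) (u : nat) (t : R) : Prop :=
  0 <= t /\ match leave u with None => True | Some s => t < s end.

Definition left_at (loc : nat -> R -> nat) (u : nat) (t : R) (i : nat) : Prop :=
  exists eps, eps > 0 /\ forall s, t - eps < s < t -> loc u s = i.

Definition empty_at (n : nat) (leave : nat -> option R) (loc : nat -> R -> nat)
    (j : nat) (t : R) : Prop :=
  forall v, (v < n)%nat -> present leave v t -> ~ left_at loc v t j.

Definition valid_leave (n : nat) (leave : nat -> option R) : Prop :=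
  forall u s, leave u = Some s -> 0 < s.

Definition run (n : nat) (c : nat -> point) (r : R) (f g : nat -> R)
    (leave : nat -> option R) (loc : nat -> R -> nat) : Prop :=
  (forall u, (u < n)%nat -> loc u 0 = u) /\
  (forall u t, (u < n)%nat -> (loc u t < n)%nat) /\
  (forall u t, (u < n)%nat -> 0 <= t ->
     exists eps, eps > 0 /\ forall s, t <= s < t + eps -> loc u s = loc u t) /\
  (forall u t, (u < n)%nat -> 0 < t -> exists i, left_at loc u t i) /\
  (forall u t i, (u < n)%nat -> 0 < t -> present leave u t -> left_at loc u t i ->
     (forall j, adj n c r i j -> at_link c i j (sched f g i t) ->
        empty_at n leave loc j t -> loc u t = j) /\
     ((forall j, adj n c r i j -> at_link c i j (sched f g i t) ->
        ~ empty_at n leave loc j t) -> loc u t = i)).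

(** Surviving robot u starves: (from some time on, i.e. in the partial SCS
    obtained after the departures) every time u arrives at a link position
    phi_ij of its current circle C_i, the circle C_j is empty. *)
Definition starves (n : nat) (c : nat -> point) (r : R) (f g : nat -> R)
    (leave : nat -> option R) (loc : nat -> R -> nat) (u : nat) : Prop :=
  (u < n)%nat /\ leave u = None /\
  exists T, forall t i j, T <= t -> 0 < t -> left_at loc u t i ->
     adj n c r i j -> at_link c i j (sched f g i t) -> empty_at n leave loc j t.

Definition starvation_state (n : nat) (c : nat -> point) (r : R) (f g : nat -> R)
    (leave : nat -> option R) (loc : nat -> R -> nat) : Prop :=
  forall u, (u < n)%nat -> leave u = None -> starves n c r f g leave loc u.

Definition leaving_set (n : nat) (leave : nat -> option R) (l : list nat) : Prop :=
  NoDup l /\ (forall u, In u l -> (u < n)%nat) /\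
  (forall u, (u < n)%nat -> (leave u <> None <-> In u l)) /\
  (forall u, (n <= u)%nat -> leave u = None).

Definition resilient_k (n : nat) (c : nat -> point) (r : R) (f g : nat -> R)
    (k : nat) : Prop :=
  forall (l : list nat) (leave : nat -> option R) (loc : nat -> R -> nat),
    length l = k -> leaving_set n leave l -> valid_leave n leave ->
    run n c r f g leave loc -> ~ starvation_state n c r f g leave loc.

Definition is_isolation_resilience (n : nat) (c : nat -> point) (r : R)
    (f g : nat -> R) (IR : nat) : Prop :=
  (IR <= n)%nat /\ resilient_k n c r f g IR /\
  (forall k, (k <= n)%nat -> resilient_k n c r f g k -> (k <= IR)%nat).

Definition is_max_starving (n : nat) (c : nat -> point) (r : R)
    (f g : nat -> R) (SN : nat) : Prop :=
  (exists (l0 : list nat) (leave : nat -> option R) (loc : nat -> R -> nat)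
          (l : list nat),
     leaving_set n leave l0 /\ valid_leave n leave /\ run n c r f g leave loc /\
     NoDup l /\ length l = SN /\ (forall u, In u l -> starves n c r f g leave loc u)) /\
  (forall (l0 : list nat) (leave : nat -> option R) (loc : nat -> R -> nat)
          (l : list nat),
     leaving_set n leave l0 -> valid_leave n leave -> run n c r f g leave loc ->
     NoDup l -> (forall u, In u l -> starves n c r f g leave loc u) ->
     (length l <= SN)%nat).

(* Main.v *)
Require Import Defs.
From Stdlib Require Import Reals List Relations Lra Lia Permutation Classical.
Open Scope R_scope.

Lemma finite_max (P : nat -> Prop) (N : nat) :
  (exists k, (k <= N)%nat /\ P k) ->
  exists m, (m <= N)%nat /\ P m /\ forall k, (k <= N)%nat -> P k -> (k <= m)%nat.
Proof.
  induction N as [|N IH]; intros [k [Hk Pk]].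
  - exists 0%nat. assert (k = 0%nat) by lia. subst. split; [lia|split; auto].
  - destruct (classic (P (S N))) as [HP|HP].
    + exists (S N). split; [lia|split; auto].
    + destruct IH as [m [Hm [Pm Hmax]]].
      { exists k. split; auto. destruct (Nat.eq_dec k (S N)); [subst; contradiction|lia]. }
      exists m. split; [lia|split; auto]. intros k' Hk' Pk'.
      destruct (Nat.eq_dec k' (S N)); [subst; contradiction|]. apply Hmax; auto; lia.
Qed.

Lemma nodup_bound (l : list nat) (n : nat) :
  NoDup l -> (forall u, In u l -> (u < n)%nat) -> (length l <= n)%nat.
Proof.
  intros Hd Hb. rewrite <- (length_seq n 0).
  apply NoDup_incl_length; auto. intros x Hx. apply in_seq. specialize (Hb x Hx). lia.
Qed.

Lemma inj_surj (n : nat) (h : nat -> nat) :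
  (forall u, (u < n)%nat -> (h u < n)%nat) ->
  (forall u v, (u < n)%nat -> (v < n)%nat -> h u = h v -> u = v) ->
  forall j, (j < n)%nat -> exists v, (v < n)%nat /\ h v = j.
Proof.
  intros Hb Hi j Hj. apply NNPP. intro Hn.
  assert (Hd : NoDup (j :: map h (seq 0 n))).
  { constructor.
    - intro Hin. apply in_map_iff in Hin. destruct Hin as [v [Hv Hin]].
      apply in_seq in Hin. apply Hn. exists v. split; [lia|auto].
    - apply NoDup_map_NoDup_ForallPairs; [|apply seq_NoDup].
      intros x y Hx Hy. apply in_seq in Hx. apply in_seq in Hy. apply Hi; lia. }
  assert (Hl := fun H => @NoDup_incl_length nat (j :: map h (seq 0 n)) (seq 0 n) Hd H).
  simpl in Hl. rewrite length_map, length_seq in Hl.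
  assert (S n <= n)%nat; [|lia]. apply Hl.
  intros x Hx. destruct Hx as [Hx|Hx].
  - subst. apply in_seq. lia.
  - apply in_map_iff in Hx. destruct Hx as [v [Hv Hin]]. apply in_seq in Hin. apply in_seq.
    subst. specialize (Hb v). lia.
Qed.

Lemma dist_sym p q : Defs.dist p q = Defs.dist q p.
Proof. unfold Defs.dist. f_equal. ring. Qed.

Lemma adj_sym n c r i j : adj n c r i j -> adj n c r j i.
Proof. unfold adj. intros [? [? [? ?]]]. rewrite dist_sym. repeat split; auto. Qed.

Lemma dist_pos p q : 0 <= Defs.dist p q.
Proof. unfold Defs.dist. apply sqrt_pos. Qed.

Lemma two_links n c r f g j a b th :
  sync_schedule n c r f g -> adj n c r j a -> adj n c r j b -> a <> b ->
  at_link c j a th -> at_link c j b th -> False.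
Proof.
  intros [Hg Hs] Ha Hb Hab [Ca Sa] [Cb Sb].
  destruct (Hs _ _ Ha) as [E2 _]. destruct (Hs _ _ Hb) as [E3 _].
  set (d1 := Defs.dist (c j) (c a)) in *. set (d2 := Defs.dist (c j) (c b)) in *.
  assert (Hd : Defs.dist (c a) (c b) = Rabs (d1 - d2)).
  { unfold Defs.dist at 1. rewrite <- sqrt_Rsqr_abs. f_equal.
    replace (fst (c a) - fst (c b)) with (cos th * d1 - cos th * d2) by lra.
    replace (snd (c a) - snd (c b)) with (sin th * d1 - sin th * d2) by lra.
    unfold Rsqr. pose proof (sin2_cos2 th) as E. unfold Rsqr in E. simpl. transitivity ((d1 - d2) * (d1 - d2) * (sin th * sin th + cos th * cos th)); [ring|rewrite E; ring]. }
  assert (H1 : 0 <= d1) by apply dist_pos. assert (H2 : 0 <= d2) by apply dist_pos.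
  destruct Ha as [Hj [Han [_ Ha]]]. destruct Hb as [_ [Hbn [_ Hb]]].
  assert (Hab' : adj n c r a b).
  { repeat split; auto. rewrite Hd. fold d1 in Ha. fold d2 in Hb.
    unfold Rabs; destruct (Rcase_abs (d1 - d2)); lra. }
  destruct (Hs _ _ Hab') as [E1 _].
  destruct (Hg a Han); lra.
Qed.

Lemma polar (a b : R) : a * a + b * b = 1 -> exists th, cos th = a /\ sin th = b.
Proof.
  intros H.
  assert (Ha : -1 <= a <= 1) by nra.
  assert (Hs : sqrt (1 - a²) = Rabs b).
  { rewrite <- sqrt_Rsqr_abs. f_equal. unfold Rsqr. lra. }
  destruct (Rle_or_lt 0 b) as [Hb|Hb].
  - exists (acos a). rewrite cos_acos, sin_acos by auto. split; auto.
    rewrite Hs. apply Rabs_right; lra.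
  - exists (- acos a). rewrite cos_neg, sin_neg, cos_acos, sin_acos by auto. split; auto.
    rewrite Hs. rewrite Rabs_left; lra.
Qed.

Lemma link_time n c r f g i j (T : R) :
  sync_schedule n c r f g -> disjoint_unit_circles n c -> adj n c r i j ->
  exists t, T <= t /\ 0 < t /\ at_link c i j (sched f g i t).
Proof.
  intros [Hg _] Hdis Hadj.
  destruct Hadj as [Hi [Hj [Hij _]]].
  set (d := Defs.dist (c i) (c j)).
  assert (Hd : d > 2) by (apply Hdis; auto).
  set (a := (fst (c j) - fst (c i)) / d). set (b := (snd (c j) - snd (c i)) / d).
  assert (Hab : a * a + b * b = 1).
  { unfold a, b. assert (Hdd : d * d = (fst (c j) - fst (c i)) ^ 2 + (snd (c j) - snd (c i)) ^ 2).
    { unfold d, Defs.dist. rewrite sqrt_sqrt. ring. apply Rplus_le_le_0_compat; apply pow2_ge_0. }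
    replace ((fst (c j) - fst (c i)) / d * ((fst (c j) - fst (c i)) / d) +
      (snd (c j) - snd (c i)) / d * ((snd (c j) - snd (c i)) / d)) with
      (((fst (c j) - fst (c i)) ^ 2 + (snd (c j) - snd (c i)) ^ 2) / (d * d)) by (field; lra).
    rewrite <- Hdd. field. lra. }
  destruct (polar a b Hab) as [th [Ca Sa]].
  assert (HPI := PI_RGT_0).
  assert (Hlink : forall x, (cos x = cos th /\ sin x = sin th) -> at_link c i j x).
  { intros x [E1 E2]. unfold at_link. fold d. rewrite E1, E2, Ca, Sa. unfold a, b.
    split; field; lra. }
  destruct (Hg i Hi) as [G|G].
  - destruct (INR_unbounded (Rabs T + Rabs ((th - f i) / (2 * PI)) + 1)) as [m Hm].
    exists ((th - f i) / (2 * PI) + INR m). split; [|split].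
    + pose proof (Rle_abs T). pose proof (Rle_abs ((th - f i) / (2 * PI))).
      pose proof (Rabs_pos ((th - f i) / (2 * PI))).  
      assert (-Rabs ((th - f i) / (2 * PI)) <= (th - f i) / (2 * PI)).
      { unfold Rabs; destruct Rcase_abs; lra. }
      lra.
    + assert (-Rabs ((th - f i) / (2 * PI)) <= (th - f i) / (2 * PI)).
      { unfold Rabs; destruct Rcase_abs; lra. }
      pose proof (Rabs_pos T). lra.
    + apply Hlink. unfold sched. rewrite G.
      replace (f i + 1 * (2 * PI * ((th - f i) / (2 * PI) + INR m))) with (th + 2 * INR m * PI)
        by (field; lra).
      rewrite cos_period, sin_period. auto.
  - destruct (INR_unbounded (Rabs T + Rabs ((f i - th) / (2 * PI)) + 1)) as [m Hm].
    exists ((f i - th) / (2 * PI) + INR m). split; [|split].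
    + pose proof (Rle_abs T). 
      assert (-Rabs ((f i - th) / (2 * PI)) <= (f i - th) / (2 * PI)).
      { unfold Rabs; destruct Rcase_abs; lra. }
      lra.
    + assert (-Rabs ((f i - th) / (2 * PI)) <= (f i - th) / (2 * PI)).
      { unfold Rabs; destruct Rcase_abs; lra. }
      pose proof (Rabs_pos T). lra.
    + apply Hlink. unfold sched. rewrite G.
      set (x := f i + -1 * (2 * PI * ((f i - th) / (2 * PI) + INR m))).
      assert (Ex : th = x + 2 * INR m * PI) by (unfold x; field; lra).
      rewrite Ex, cos_period, sin_period. auto.
Qed.

Lemma uniform_T n c r f g leave loc l :
  (forall u, In u l -> starves n c r f g leave loc u) ->
  exists T, 0 < T /\ forall u, In u l -> forall t i j, T <= t -> 0 < t -> left_at loc u t i ->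
     adj n c r i j -> at_link c i j (sched f g i t) -> empty_at n leave loc j t.
Proof.
  induction l as [|a l IH]; intros H.
  - exists 1. split; [lra|]. intros u [].
  - destruct IH as [T [HT HTl]]. { intros; apply H; right; auto. }
    destruct (H a (or_introl eq_refl)) as [_ [_ [Ta HTa]]].
    exists (Rmax T Ta). split. { pose proof (Rmax_l T Ta). lra. }
    intros u [<-|Hu] t i j Ht.
    + apply HTa. pose proof (Rmax_r T Ta). lra.
    + apply HTl; auto. pose proof (Rmax_l T Ta). lra.
Qed.

Definition inb (l : list nat) (u : nat) : bool :=
  if in_dec Nat.eq_dec u l then true else false.

Lemma lemA n c r f g l0 leave loc l :
  leaving_set n leave l0 -> valid_leave n leave -> run n c r f g leave loc -> NoDup l ->
  (forall u, In u l -> starves n c r f g leave loc u) ->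
  ~ resilient_k n c r f g (n - length l).
Proof.
  intros Hls Hval Hrun Hnd Hst Hres.
  destruct (uniform_T _ _ _ _ _ _ _ _ Hst) as [T [HT HTl]].
  assert (Hln : forall u, In u l -> (u < n)%nat /\ leave u = None).
  { intros u Hu. destruct (Hst u Hu) as [A [B _]]. auto. }
  destruct Hls as [_ [_ [_ Hbig]]].
  set (leave' := fun u => if Nat.ltb u n then
                   (if in_dec Nat.eq_dec u l then None
                    else Some (match leave u with Some s => Rmin s T | None => T end))
                 else None).
  set (l' := filter (fun u => negb (inb l u)) (seq 0 n)).
  assert (Hpsub : forall u t, present leave' u t -> present leave u t).
  { intros u t [H0 H1]. split; auto. unfold leave' in H1.
    destruct (Nat.ltb_spec u n).
    - destruct (in_dec Nat.eq_dec u l). { destruct (Hln u i) as [_ ->]. auto. }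
      destruct (leave u); auto. pose proof (Rmin_l r0 T). lra.
    - rewrite Hbig; auto. }
  assert (Hpeq : forall u t, (u < n)%nat -> t < T -> present leave u t -> present leave' u t).
  { intros u t Hu Ht [H0 H1]. split; auto. unfold leave'.
    destruct (Nat.ltb_spec u n); [|lia].
    destruct (in_dec Nat.eq_dec u l); auto.
    destruct (leave u); auto. apply Rmin_glb_lt; auto. }
  assert (Hesub : forall j t, empty_at n leave loc j t -> empty_at n leave' loc j t).
  { intros j t He v Hv Hp. apply He; auto. }
  assert (Heeq : forall j t, t < T -> empty_at n leave' loc j t -> empty_at n leave loc j t).
  { intros j t Ht He v Hv Hp. apply He; auto. }
  assert (Hlate : forall u t, T <= t -> (u < n)%nat -> present leave' u t -> In u l).
  { intros u t Ht Hu [_ H1]. unfold leave' in H1.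
    destruct (Nat.ltb_spec u n); [|lia].
    destruct (in_dec Nat.eq_dec u l); auto.
    destruct (leave u). { pose proof (Rmin_r r0 T). lra. } lra. }
  apply (Hres l' leave' loc).
  -
    pose proof (filter_length (inb l) (seq 0 n)) as E.
    rewrite length_seq in E. unfold l'.
    assert (Hp : length (filter (inb l) (seq 0 n)) = length l).
    { apply Permutation_length. apply NoDup_Permutation.
      - apply NoDup_filter, seq_NoDup.
      - auto.
      - intros x. rewrite filter_In, in_seq. unfold inb.
        destruct (in_dec Nat.eq_dec x l); split; intros; try tauto.
        + split; auto. destruct (Hln x i). lia.
        + destruct H; discriminate.  }
    lia.
  -
    split; [|split; [|split]].
    + apply NoDup_filter, seq_NoDup.
    + intros u Hu. unfold l' in Hu. apply filter_In in Hu. destruct Hu as [Hu _]. apply in_seq in Hu. lia.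
    + intros u Hu. unfold l'. rewrite filter_In, in_seq. unfold leave', inb.
      destruct (Nat.ltb_spec u n); [|lia].
      destruct (in_dec Nat.eq_dec u l); simpl.
      * split; intros Hh0; [congruence|]. match goal with Hh : _ /\ _ |- _ => destruct Hh; discriminate end.
      * split; intros; [split; [lia|auto]|discriminate].
    + intros u Hu. unfold leave'. destruct (Nat.ltb_spec u n); [lia|auto].
  -
    intros u s Hs. unfold leave' in Hs.
    destruct (Nat.ltb u n); [|discriminate].
    destruct (in_dec Nat.eq_dec u l); [discriminate|].
    destruct (leave u) eqn:E; injection Hs; intros <-; auto.
    apply Rmin_glb_lt; auto. apply (Hval u); auto.
  -
    destruct Hrun as [R1 [R2 [R3 [R4 R5]]]].
    split; [auto|split; [auto|split; [auto|split; [auto|]]]].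
    intros u t i Hu Ht Hp Hl. destruct (R5 u t i Hu Ht (Hpsub _ _ Hp) Hl) as [P1 P2].
    split.
    + intros j Hadj Hlk He. apply P1; auto.
      destruct (Rlt_or_le t T) as [HtT|HtT].
      * apply Heeq; auto.
      * apply (HTl u (Hlate u t HtT Hu Hp) t i j); auto.
    + intros Hne. apply P2. intros j Hadj Hlk He. apply (Hne j Hadj Hlk). apply Hesub; auto.
  -
    intros u Hu Hnone.
    assert (Hin : In u l).
    { unfold leave' in Hnone. destruct (Nat.ltb_spec u n); [|lia].
      destruct (in_dec Nat.eq_dec u l); auto. discriminate. }
    split; [auto|split; [auto|]]. exists T. intros t i j Ht Ht0 Hl Hadj Hlk.
    apply Hesub. apply (HTl u Hin t i j); auto.
Qed.

Lemma finite_eps (n : nat) (Q : nat -> R -> Prop) :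
  (forall u e e', Q u e -> 0 < e' <= e -> Q u e') ->
  (forall u, (u < n)%nat -> exists e, e > 0 /\ Q u e) ->
  exists e, e > 0 /\ forall u, (u < n)%nat -> Q u e.
Proof.
  intros Hmono. induction n as [|n IH]; intros H.
  - exists 1. split; [lra|]. intros; lia.
  - destruct IH as [e [He HQ]]. { intros; apply H; lia. }
    destruct (H n ltac:(lia)) as [e1 [He1 HQ1]].
    exists (Rmin e e1). split. { apply Rmin_glb_lt; auto. }
    intros u Hu. destruct (Nat.eq_dec u n) as [->|Hne].
    + apply (Hmono _ e1); auto. split; [apply Rmin_glb_lt; auto|apply Rmin_r].
    + apply (Hmono _ e); [apply HQ; lia|]. split; [apply Rmin_glb_lt; auto|apply Rmin_l].
Qed.

Section Full.
Variables (n : nat) (c : nat -> point) (r : R) (f g : nat -> R) (leave : nat -> option R)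
  (loc : nat -> R -> nat).
Hypothesis Hsync : sync_schedule n c r f g.
Hypothesis Hrun : run n c r f g leave loc.
Hypothesis Hnone : forall u, leave u = None.

Definition injt (t : R) := forall u v, (u < n)%nat -> (v < n)%nat -> loc u t = loc v t -> u = v.

Lemma left_common (t : R) : 0 < t ->
  exists s, 0 <= s < t /\ forall u, (u < n)%nat -> left_at loc u t (loc u s).
Proof.
  intros Ht. destruct Hrun as [_ [_ [_ [R4 _]]]].
  destruct (finite_eps n (fun u e => forall s1 s2, t - e < s1 < t -> t - e < s2 < t -> loc u s1 = loc u s2))
    as [e [He HQ]].
  - intros u e e' H [H1 H2] s1 s2 A B. apply H; lra.
  - intros u Hu. destruct (R4 u t Hu Ht) as [i [e [He Hi]]]. exists e. split; auto.
    intros s1 s2 A B. rewrite (Hi s1 A), (Hi s2 B). auto.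
  - set (s := t - Rmin e t / 2).
    assert (Hm1 : Rmin e t <= e) by apply Rmin_l. assert (Hm2 : Rmin e t <= t) by apply Rmin_r.
    assert (Hm3 : 0 < Rmin e t) by (apply Rmin_glb_lt; auto).
    exists s. split; [unfold s; lra|]. intros u Hu. exists e. split; auto.
    intros s1 Hs1. apply HQ; auto. unfold s; lra.
Qed.

Lemma step_tau (tau : R) : 0 < tau -> (forall s, 0 <= s < tau -> injt s) -> injt tau.
Proof.
  intros Ht Hinj. destruct (left_common tau Ht) as [s [Hs HL]].
  destruct Hrun as [_ [_ [_ [_ R5]]]].
  assert (Hpres : forall u, present leave u tau) by (intros u; split; [lra|rewrite Hnone; auto]).
  assert (Hbeh : forall u, (u < n)%nat ->
     (exists j, adj n c r (loc u s) j /\ at_link c (loc u s) j (sched f g (loc u s) tau) /\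
        empty_at n leave loc j tau /\ loc u tau = j) \/ loc u tau = loc u s).
  { intros u Hu. destruct (R5 u tau (loc u s) Hu Ht (Hpres u) (HL u Hu)) as [P1 P2].
    destruct (classic (exists j, adj n c r (loc u s) j /\ at_link c (loc u s) j (sched f g (loc u s) tau) /\
        empty_at n leave loc j tau)) as [[j [A [B C]]]|Hn].
    - left. exists j. split; [auto|split; [auto|split; [auto|]]]. apply P1; auto.
    - right. apply P2. intros j A B C. apply Hn. exists j; auto. }
  assert (Hs' : injt s) by (apply Hinj; lra).
  intros u v Hu Hv E.
  destruct (Hbeh u Hu) as [[j [A [B [C D]]]]|D]; destruct (Hbeh v Hv) as [[j' [A' [B' [C' D']]]]|D'].
  - destruct (Nat.eq_dec (loc u s) (loc v s)) as [Heq|Hne]. { apply Hs'; auto. }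
    exfalso. assert (Hjj : j' = j) by congruence. rewrite Hjj in A', B'.
    destruct Hsync as [Hg Hs2].
    assert (X1 := adj_sym _ _ _ _ _ A). assert (X2 := adj_sym _ _ _ _ _ A').
    assert (X3 := proj1 (proj2 (Hs2 _ _ A) tau ltac:(lra)) B).
    assert (X4 := proj1 (proj2 (Hs2 _ _ A') tau ltac:(lra)) B').
    exact (two_links n c r f g j (loc u s) (loc v s) (sched f g j tau) (conj Hg Hs2) X1 X2 Hne X3 X4).
  - exfalso. apply (C v Hv (Hpres v)). replace j with (loc v s) by congruence. apply HL; auto.
  - exfalso. apply (C' u Hu (Hpres u)). replace j' with (loc u s) by congruence. apply HL; auto.
  - apply Hs'; auto. congruence.
Qed.

Lemma inj_all : forall t, 0 <= t -> injt t.
Proof.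
  destruct Hrun as [R1 [R2 [R3 _]]].
  assert (Hright : forall tau, 0 <= tau -> injt tau -> exists e, e > 0 /\ forall s, tau <= s < tau + e -> injt s).
  { intros tau Ht Hi.
    destruct (finite_eps n (fun u e => forall s, tau <= s < tau + e -> loc u s = loc u tau)) as [e [He HQ]].
    - intros u e e' H [H1 H2] s' A. apply H; lra.
    - intros u Hu. apply R3; auto.
    - exists e. split; auto. intros s' Hs' u v Hu Hv E. apply Hi; auto.
      rewrite <- (HQ u Hu s'), <- (HQ v Hv s'); auto. }
  intros t0 Ht0. apply NNPP. intros Hbad.
  set (E := fun x => 0 <= x /\ forall s, 0 <= s <= x -> injt s).
  assert (Hb : bound E).
  { exists t0. intros x [Hx Hxs]. destruct (Rle_or_lt x t0); auto.
    exfalso. apply Hbad. apply Hxs. lra. }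
  assert (H0 : injt 0).
  { intros u v Hu Hv E'. rewrite (R1 u Hu), (R1 v Hv) in E'. auto. }
  assert (HE0 : E 0).
  { split; [lra|]. intros s Hs. replace s with 0 by lra. auto. }
  destruct (completeness E Hb (ex_intro _ 0 HE0)) as [tau [Hub Hlub]].
  assert (Htau0 : 0 <= tau) by (apply Hub; auto).
  assert (Hbelow : forall s, 0 <= s < tau -> injt s).
  { intros s Hs. apply NNPP. intros Hn.
    assert (tau <= s); [|lra]. apply Hlub. intros x [Hx Hxs].
    destruct (Rle_or_lt x s); auto. exfalso. apply Hn, Hxs. lra. }
  assert (Hat : injt tau).
  { destruct (Rle_lt_or_eq_dec 0 tau Htau0) as [Hp|Hz].
    - apply step_tau; auto.
    - rewrite <- Hz. auto. }
  destruct (Hright tau Htau0 Hat) as [e [He Hs]].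
  assert (E (tau + e / 2)).
  { split; [lra|]. intros s Hs'. destruct (Rlt_or_le s tau).
    - apply Hbelow; lra.
    - apply Hs; lra. }
  assert (tau + e / 2 <= tau) by (apply Hub; auto). lra.
Qed.

End Full.

Lemma first_step (A : Type) (Rl : relation A) x y :
  clos_refl_trans_1n A Rl x y -> x <> y -> exists z, Rl x z.
Proof. intros H; destruct H as [|x0 z H1 H2]; intros Hn. - congruence. - exists x0; auto. Qed.

Lemma res0 n c r f g :
  (2 <= n)%nat -> disjoint_unit_circles n c -> connected_graph n c r -> sync_schedule n c r f g ->
  resilient_k n c r f g 0.
Proof.
  intros Hn Hdis Hcon Hsync l leave loc Hlen Hls Hval Hrun Hss.
  destruct l; [|discriminate].
  destruct Hls as [_ [_ [Hin Hbig]]].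
  assert (Hnone : forall u, leave u = None).
  { intros u. destruct (Nat.lt_ge_cases u n) as [Hun|Hun]; [|apply Hbig; auto].
    apply NNPP. intros H. apply (proj1 (Hin u Hun) H). }
  assert (Hc := Hcon 0%nat 1%nat ltac:(lia) ltac:(lia)).
  apply clos_rt_rt1n in Hc.
  assert (Hex : exists j, adj n c r 0 j).
  { apply (first_step _ _ _ _ Hc). lia. }
  destruct Hex as [j Hadj].
  destruct (uniform_T n c r f g leave loc (seq 0 n)) as [T [HT HTl]].
  { intros u Hu. apply in_seq in Hu. apply Hss; auto. lia. }
  destruct (link_time n c r f g 0 j T Hsync Hdis Hadj) as [t [Ht1 [Ht2 Hlk]]].
  destruct (left_common _ _ _ _ _ _ _ Hrun t Ht2) as [s [Hs HL]].
  assert (Hinj := inj_all n c r f g leave loc Hsync Hrun Hnone s ltac:(lra)).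
  destruct Hrun as [_ [R2 _]].
  assert (Hj : (j < n)%nat) by (destruct Hadj as [_ [? _]]; auto).
  destruct (inj_surj n (fun u => loc u s) (fun u Hu => R2 u s Hu) Hinj 0%nat ltac:(lia)) as [v [Hv Ev]].
  destruct (inj_surj n (fun u => loc u s) (fun u Hu => R2 u s Hu) Hinj j Hj) as [w [Hw Ew]].
  assert (He : empty_at n leave loc j t).
  { apply (HTl v (proj2 (in_seq n 0 v) ltac:(lia)) t 0%nat j); auto. rewrite <- Ev. apply HL; auto. }
  apply (He w Hw). { split; [lra|rewrite Hnone; auto]. }
  rewrite <- Ew. apply HL; auto.
Qed.

Lemma compl_length n l :
  NoDup l -> (forall u, In u l -> (u < n)%nat) ->
  length (filter (fun u => negb (inb l u)) (seq 0 n)) = (n - length l)%nat.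
Proof.
  intros Hnd Hb.
  pose proof (filter_length (inb l) (seq 0 n)) as E.
  rewrite length_seq in E.
  assert (Hp : length (filter (inb l) (seq 0 n)) = length l).
  { apply Permutation_length. apply NoDup_Permutation.
    - apply NoDup_filter, seq_NoDup.
    - auto.
    - intros x. rewrite filter_In, in_seq. unfold inb.
      destruct (in_dec Nat.eq_dec x l); split; intros Hh; try tauto.
      + split; auto. specialize (Hb x i). lia.
      + destruct Hh; discriminate. }
  lia.
Qed.

Lemma static_run n c r f g :
  run n c r f g (fun _ => None) (fun u _ => u).
Proof.
  split; [auto|split; [auto|split; [|split]]].
  - intros u t _ _. exists 1. split; [lra|auto].
  - intros u t _ _. exists u. exists 1. split; [lra|auto].
  - intros u t i Hu Ht Hp [e [He Hl]].
    assert (Hi : u = i) by (apply (Hl (t - e / 2)); lra). subst i.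
    split.
    + intros j Hadj _ He'. exfalso. destruct Hadj as [_ [Hj _]].
      apply (He' j Hj). { split; [lra|auto]. }
      exists 1. split; [lra|auto].
    + auto.
Qed.

Lemma static_ls n : leaving_set n (fun _ => None) nil.
Proof.
  split; [constructor|split; [intros u []|split]].
  - intros u _. split; [intros H; exfalso; apply H; auto|intros []].
  - auto.
Qed.

Lemma firstn_in (A : Type) m (l : list A) x : In x (firstn m l) -> In x l.
Proof. intros H. rewrite <- (firstn_skipn m l). apply in_or_app. auto. Qed.

Lemma firstn_nodup (A : Type) m (l : list A) : NoDup l -> NoDup (firstn m l).
Proof. intros H. rewrite <- (firstn_skipn m l) in H. eapply NoDup_app_remove_r; eauto. Qed.

Theorem lemma15 (n : nat) (c : nat -> point) (r : R) (f g : nat -> R) :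
  (2 <= n)%nat -> 0 < r ->
  disjoint_unit_circles n c ->
  connected_graph n c r ->
  sync_schedule n c r f g ->
  exists IR SN : nat,
    is_isolation_resilience n c r f g IR /\
    is_max_starving n c r f g SN /\
    (SN + IR = n - 1)%nat.
Proof.
  intros Hn Hr Hdis Hcon Hsync.
  assert (P0 := res0 n c r f g Hn Hdis Hcon Hsync).
  assert (Hst := static_run n c r f g). assert (Hsls := static_ls n).
  assert (Hsval : valid_leave n (fun _ => None)) by (intros u s H; discriminate).
  assert (nPn : ~ resilient_k n c r f g n).
  { assert (H := lemA n c r f g nil _ _ nil Hsls Hsval Hst (NoDup_nil _) (fun u H => match H with end)).
    simpl in H. rewrite Nat.sub_0_r in H. auto. }
  destruct (finite_max (resilient_k n c r f g) n (ex_intro _ 0%nat (conj (Nat.le_0_l n) P0)))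
    as [IR [HIRn [PIR HIRmax]]].
  assert (HIRlt : (IR < n)%nat).
  { destruct (Nat.eq_dec IR n); [subst; contradiction|lia]. }
  assert (nPS : ~ resilient_k n c r f g (S IR)).
  { intros H. specialize (HIRmax (S IR) ltac:(lia) H). lia. }
  set (Q := fun m => exists (l0 : list nat) (leave : nat -> option R) (loc : nat -> R -> nat)
          (l : list nat),
     leaving_set n leave l0 /\ valid_leave n leave /\ run n c r f g leave loc /\
     NoDup l /\ length l = m /\ (forall u, In u l -> starves n c r f g leave loc u)).
  assert (Qbound : forall m, Q m -> (m <= n)%nat).
  { intros m [l0 [leave [loc [l [_ [_ [_ [Hnd [Hl Hs]]]]]]]]]. subst m.
    apply nodup_bound; auto. intros u Hu. apply (Hs u Hu). }
  assert (Q0 : Q 0%nat).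
  { exists nil, (fun _ => None), (fun u _ => u), nil.
    split; [auto|split; [auto|split; [auto|split; [constructor|split; [auto|intros u []]]]]]. }
  assert (QIR : Q (n - 1 - IR)%nat).
  { assert (Hex : exists l leave loc, length l = S IR /\ leaving_set n leave l /\ valid_leave n leave /\
       run n c r f g leave loc /\ starvation_state n c r f g leave loc).
    { apply NNPP. intros H. apply nPS. intros l leave loc A B C D E. apply H.
      exists l, leave, loc. auto. }
    destruct Hex as [l [leave [loc [A [B [C [D E]]]]]]].
    exists l, leave, loc, (filter (fun u => negb (inb l u)) (seq 0 n)).
    destruct B as [B1 [B2 [B3 B4]]].
    split; [exact (conj B1 (conj B2 (conj B3 B4)))|split; [auto|split; [auto|split; [|split]]]].
    - apply NoDup_filter, seq_NoDup.
    - rewrite compl_length; auto. lia.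
    - intros u Hu. apply filter_In in Hu. destruct Hu as [Hu Hb]. apply in_seq in Hu.
      apply E; [lia|]. unfold inb in Hb. destruct (in_dec Nat.eq_dec u l); [discriminate|].
      apply NNPP. intros Hne. apply n0. apply (B3 u); auto. lia. }
  destruct (finite_max Q n (ex_intro _ 0%nat (conj (Nat.le_0_l n) Q0))) as [SN [HSNn [QSN HSNmax]]].
  exists IR, SN. split; [|split].
  - split; [auto|split; auto].
  - split.
    + exact QSN.
    + intros l0 leave loc l A B C D E. apply HSNmax.
      * apply nodup_bound; auto. intros u Hu. apply (E u Hu).
      * exists l0, leave, loc, l. repeat (split; [assumption|]). split; [reflexivity|assumption].
  - assert (H1 : (n - 1 - IR <= SN)%nat) by (apply HSNmax; auto; lia).
    assert (H2 : (SN < n - IR)%nat).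
    { destruct (Nat.lt_ge_cases SN (n - IR)) as [H|H]; auto. exfalso.
      destruct QSN as [l0 [leave [loc [l [A [B [C [D [E F]]]]]]]]].
      apply (lemA n c r f g l0 leave loc (firstn (n - IR) l) A B C (firstn_nodup _ _ _ D)).
      - intros u Hu. apply F. eapply firstn_in; eauto.
      - rewrite length_firstn. replace (Init.Nat.min (n - IR) (length l)) with (n - IR)%nat by lia.
        replace (n - (n - IR))%nat with IR by lia. auto. }
    lia.
Qed.
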